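(* Let $K\ge 2$, let $(\mathbf{x},\mathbf{y})$ be a training sample with one-hot label $\mathbf{y}$ whose ground-truth index is $g$ ($y_g=1$, $y_k=0$ for $k\neq g$), and let $\mathbf{o}=\mathcal{F}_\Theta(\mathbf{x})\in\mathbb{R}^K$ be the network's logits. Let $\mathcal{L}$ be any one of the three evidential losses $\mathcal{L}^{\mathrm{MSE}},\mathcal{L}^{\mathrm{CE}},\mathcal{L}^{\mathrm{Log}}$ defined in the context. (i) If $\mathcal{A}=\mathrm{ReLU}$ and $o_k\le 0$ for all $k$ (so that $\mathbf{e}=\mathbf{0}$, a zero-evidence sample), then $\partial\mathcal{L}/\partial o_k=0$ for every $k\in\{1,\dots,K\}$; consequently the gradient of $\mathcal{L}(\mathbf{x},\mathbf{y})$ with respect to the network parameters, $\partial\mathcal{L}/\partial\Theta=\sum_k(\partial\mathcal{L}/\partial o_k)(\partial o_k/\partial\Theta)$, is zero. (ii) If $\mathcal{A}=\mathrm{SoftPlus}$ or $\mathcal{A}=\exp$, then as the evidence tends to zero, i.e. as $o_k\to-\infty$ for all $k$, one has $\partial\mathcal{L}/\partial o_k\to 0$ for every $k$; consequently, whenever $\partial o_k/\partial\Theta$ remains bounded, the gradient of $\mathcal{L}(\mathbf{x},\mathbf{y})$ with respect to $\Theta$ tends to zero.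
   Context: Evidential classification model for $K$ classes: a neural network $\mathcal{F}_\Theta$ outputs logits $\mathbf{o}=\mathcal{F}_\Theta(\mathbf{x})\in\mathbb{R}^K$; a non-negative activation $\mathcal{A}$ applied componentwise gives the evidence $\mathbf{e}=\mathcal{A}(\mathbf{o})$, with $\mathcal{A}\in\{\mathrm{ReLU},\mathrm{SoftPlus},\exp\}$, where $\mathrm{ReLU}(t)=\max(0,t)$ (with derivative taken to be $1$ if $t>0$ and $0$ if $t\le 0$), $\mathrm{SoftPlus}(t)=\log(1+e^t)$. Dirichlet parameters $\boldsymbol\alpha=\mathbf{e}+\mathbf{1}$, Dirichlet strength $S=\sum_{k=1}^K\alpha_k=K+\sum_k e_k$. The evidential losses are $\mathcal{L}^{\mathrm{MSE}}(\mathbf{x},\mathbf{y})=\sum_{j=1}^K\big(y_j-\alpha_j/S\big)^2+\frac{\alpha_j(S-\alpha_j)}{S^2(S+1)}$, $\mathcal{L}^{\mathrm{CE}}(\mathbf{x},\mathbf{y})=\sum_{k=1}^K y_k\big(\Psi(S)-\Psi(\alpha_k)\big)$ with $\Psi$ the digamma function, $\mathcal{L}^{\mathrm{Log}}(\mathbf{x},\mathbf{y})=\sum_{k=1}^K y_k\big(\log S-\log\alpha_k\big)$. A zero-evidence sample is one for which the model outputs $e_k=0$ for all classes $k$. *)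

(* Defs.v *)
From Stdlib Require Import Reals Lra Arith.
From Coquelicot Require Import Coquelicot.
Open Scope R_scope.

(* Vectors of R^K are represented as functions nat -> R; only indices k < K matter. *)

Fixpoint fsum (n : nat) (f : nat -> R) : R :=
  match n with
  | O => 0
  | S m => fsum m f + f m
  end.

Definition upd (v : nat -> R) (k : nat) (t : R) : nat -> R :=
  fun j => if Nat.eqb j k then t else v j.

Definition euler_gamma : R :=
  real (Lim_seq (fun n => fsum n (fun i => / INR (S i)) - ln (INR n))).

Definition digamma (x : R) : R :=
  - euler_gamma + Series (fun n => / (INR n + 1) - / (INR n + x)).

(* Activations and their derivatives (ReLU' taken to be 1 if t > 0, 0 if t <= 0). *)
Inductive activation := ReLU | SoftPlus | ExpAct.

Definition relu (t : R) : R := Rmax 0 t.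
Definition softplus (t : R) : R := ln (1 + exp t).

Definition act (A : activation) (t : R) : R :=
  match A with
  | ReLU => relu t
  | SoftPlus => softplus t
  | ExpAct => exp t
  end.

Definition relu_deriv (t : R) : R := if Rlt_dec 0 t then 1 else 0.

Definition alpha_of (A : activation) (o : nat -> R) : nat -> R :=
  fun k => act A (o k) + 1.

Definition strength (K : nat) (alpha : nat -> R) : R := fsum K alpha.

Definition loss_MSE (K : nat) (y alpha : nat -> R) : R :=
  let S := strength K alpha in
  fsum K (fun j => (y j - alpha j / S) ^ 2
                   + alpha j * (S - alpha j) / (S ^ 2 * (S + 1))).

Definition loss_CE (K : nat) (y alpha : nat -> R) : R :=
  let S := strength K alpha in
  fsum K (fun k => y k * (digamma S - digamma (alpha k))).

Definition loss_Log (K : nat) (y alpha : nat -> R) : R :=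
  let S := strength K alpha in
  fsum K (fun k => y k * (ln S - ln (alpha k))).

Inductive loss_kind := LMSE | LCE | LLog.

Definition loss (L : loss_kind) (K : nat) (y alpha : nat -> R) : R :=
  match L with
  | LMSE => loss_MSE K y alpha
  | LCE => loss_CE K y alpha
  | LLog => loss_Log K y alpha
  end.

Definition onehot (g : nat) : nat -> R :=
  fun k => if Nat.eqb k g then 1 else 0.

Definition loss_of_logits (L : loss_kind) (A : activation) (K : nat) (y o : nat -> R) : R :=
  loss L K y (alpha_of A o).

Definition dloss_dalpha (L : loss_kind) (K : nat) (y alpha : nat -> R) (k : nat) : R :=
  Derive (fun t => loss L K y (upd alpha k t)) (alpha k).

Definition dloss_dlogit_relu (L : loss_kind) (K : nat) (y o : nat -> R) (k : nat) : R :=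
  dloss_dalpha L K y (alpha_of ReLU o) k * relu_deriv (o k).

Definition dloss_dlogit (L : loss_kind) (A : activation) (K : nat) (y o : nat -> R) (k : nat) : R :=
  Derive (fun t => loss_of_logits L A K y (upd o k t)) (o k).

(* Main.v *)
Require Import Defs.
From Stdlib Require Import Reals Lra Arith Lia FunctionalExtensionality.
From Coquelicot Require Import Coquelicot.
Open Scope R_scope.

Definition tel (n : nat) : R := / (INR n + 1) - / (INR n + 2).

Lemma sum_tel : forall n, sum_n tel n = 1 - / (INR n + 2).
Proof.
  induction n.
  - rewrite sum_O. unfold tel. simpl. field.
  - rewrite sum_Sn, IHn. unfold tel. rewrite S_INR. unfold plus; simpl. field.
    split; pose proof (pos_INR n); lra.
Qed.

Lemma ex_series_tel : ex_series tel.
Proof.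
  exists 1. unfold is_series.
  change (is_lim_seq (sum_n tel) 1).
  apply is_lim_seq_spec. intros eps.
  destruct (archimed_cor1 eps (cond_pos eps)) as [N [HN HN0]].
  exists N. intros n Hn. rewrite sum_tel.
  assert (HNpos : 0 < INR N) by (apply lt_0_INR; lia).
  assert (INR N <= INR n) by (apply le_INR; lia).
  replace (1 - / (INR n + 2) - 1) with (- / (INR n + 2)) by ring.
  rewrite Rabs_Ropp, Rabs_pos_eq.
  - apply Rle_lt_trans with (/ INR N); auto. apply Rinv_le_contravar; lra.
  - left; apply Rinv_0_lt_compat; lra.
Qed.

Lemma inv_diff_bound : forall N u v, 0 <= N -> 1 <= u -> 1 <= v ->
  Rabs (/ (N + v) - / (N + u)) <= Rabs (u - v) * (2 * (/ (N + 1) - / (N + 2))).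
Proof.
  intros N u v HN Hu Hv.
  replace (/ (N + v) - / (N + u)) with ((u - v) * / ((N + u) * (N + v))) by (field; lra).
  rewrite Rabs_mult. apply Rmult_le_compat_l; [apply Rabs_pos|].
  rewrite Rabs_pos_eq by (left; apply Rinv_0_lt_compat; nra).
  replace (2 * (/ (N + 1) - / (N + 2))) with (/ ((N + 1) * (N + 2) / 2)) by (field; lra).
  apply Rinv_le_contravar; nra.
Qed.

Definition dterm (x : R) (n : nat) : R := / (INR n + 1) - / (INR n + x).

Lemma ex_series_2tel : ex_series (fun n => 2 * tel n).
Proof.
  apply (ex_series_scal_l 2 tel). apply ex_series_tel.
Qed.

Lemma ex_series_dterm : forall x, 1 <= x -> ex_series (dterm x).
Proof.
  intros x Hx.
  apply (@ex_series_le R_AbsRing R_CompleteNormedModule _ (fun n => Rabs (x - 1) * (2 * tel n))).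
  - intros n. change norm with Rabs. unfold dterm, tel.
    apply inv_diff_bound; [apply pos_INR|lra|lra].
  - apply (ex_series_scal_l (Rabs (x - 1)) (fun n => 2 * tel n)). apply ex_series_2tel.
Qed.

Lemma digamma_lip : forall u v, 1 <= u -> 1 <= v ->
  Rabs (digamma u - digamma v) <= Series (fun n => 2 * tel n) * Rabs (u - v).
Proof.
  intros u v Hu Hv. unfold digamma.
  replace (- euler_gamma + Series (fun n : nat => / (INR n + 1) - / (INR n + u)) -
   (- euler_gamma + Series (fun n : nat => / (INR n + 1) - / (INR n + v))))
   with (Series (dterm u) - Series (dterm v)) by (unfold dterm; ring).
  rewrite <- Series_minus by (apply ex_series_dterm; lra).
  assert (Hb : forall n, Rabs (dterm u n - dterm v n) <= Rabs (u - v) * (2 * tel n)).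
  { intros n. unfold dterm, tel.
    replace (/ (INR n + 1) - / (INR n + u) - (/ (INR n + 1) - / (INR n + v)))
      with (/ (INR n + v) - / (INR n + u)) by ring.
    apply inv_diff_bound; [apply pos_INR|lra|lra]. }
  assert (Hex : ex_series (fun n => Rabs (u - v) * (2 * tel n))).
  { apply (ex_series_scal_l (Rabs (u - v)) (fun n => 2 * tel n)). apply ex_series_2tel. }
  eapply Rle_trans. apply Series_Rabs.
  - apply (@ex_series_le R_AbsRing R_CompleteNormedModule _ _ (fun n => Rle_trans _ _ _ (Req_le _ _ (Rabs_Rabsolu _)) (Hb n)) Hex).
  - eapply Rle_trans. apply Series_le; [|exact Hex].
    intros n; split; [apply Rabs_pos| apply Hb].
    rewrite Series_scal_l. right; ring.
Qed.

Definition nice (D : (nat -> R) -> Prop) (f : (nat -> R) -> R -> R) : Prop :=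
  exists B C, 0 <= B /\ 0 <= C /\ forall a t s, D a -> 1 <= t <= 2 -> 1 <= s <= 2 ->
    Rabs (f a t) <= B /\ Rabs (f a t - f a s) <= C * Rabs (t - s).

Section Nice.
Variable D : (nat -> R) -> Prop.

Lemma nice_ext : forall f g, (forall a t, f a t = g a t) -> nice D f -> nice D g.
Proof.
  intros f g E [B [C [HB [HC H]]]]. exists B, C; split; [auto|split; [auto|]].
  intros; rewrite <- !E; apply H; auto.
Qed.

Lemma nice_const : forall (c : (nat -> R) -> R) B, (forall a, D a -> Rabs (c a) <= B) ->
  nice D (fun a _ => c a).
Proof.
  intros c B H. exists (Rabs B), 0. refine (conj (Rabs_pos _) (conj (Rle_refl _) _)). intros; split.
  -  eapply Rle_trans; [apply H; auto| apply RRle_abs].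
  - intros. unfold Rminus. rewrite Rplus_opp_r, Rabs_R0. lra.
Qed.

Lemma nice_id : nice D (fun _ t => t).
Proof.
  exists 2, 1. split; [lra|split; [lra|]]. intros a t s _ Ht Hs. split.
  - rewrite Rabs_pos_eq; lra.
  - lra.
Qed.

Lemma nice_plus : forall f g, nice D f -> nice D g -> nice D (fun a t => f a t + g a t).
Proof.
  intros f g [B1 [C1 [HB1 [HC1 H1]]]] [B2 [C2 [HB2 [HC2 H2]]]].
  exists (B1 + B2), (C1 + C2). split; [lra|split; [lra|]].
  intros a t s Da Ht Hs. destruct (H1 a t s Da Ht Hs) as [A1 A2].
  destruct (H2 a t s Da Ht Hs) as [A3 A4]. split.
  - eapply Rle_trans; [apply Rabs_triang|]; lra.
  - replace (f a t + g a t - (f a s + g a s)) with ((f a t - f a s) + (g a t - g a s)) by ring.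
    eapply Rle_trans; [apply Rabs_triang|]; lra.
Qed.

Lemma nice_opp : forall f, nice D f -> nice D (fun a t => - f a t).
Proof.
  intros f [B [C [HB [HC H]]]]. exists B, C. refine (conj HB (conj HC _)).
  intros a t s Da Ht Hs. destruct (H a t s Da Ht Hs) as [A1 A2]. split.
  - rewrite Rabs_Ropp; auto.
  - replace (- f a t - - f a s) with (- (f a t - f a s)) by ring. rewrite Rabs_Ropp; auto.
Qed.

Lemma nice_minus : forall f g, nice D f -> nice D g -> nice D (fun a t => f a t - g a t).
Proof.
  intros f g Hf Hg. apply nice_plus; auto. apply nice_opp; auto.
Qed.

Lemma nice_mult : forall f g, nice D f -> nice D g -> nice D (fun a t => f a t * g a t).
Proof.
  intros f g [B1 [C1 [HB1 [HC1 H1]]]] [B2 [C2 [HB2 [HC2 H2]]]].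
  exists (B1 * B2), (B1 * C2 + B2 * C1). split; [nra|split; [nra|]].
  intros a t s Da Ht Hs. destruct (H1 a t s Da Ht Hs) as [A1 A2].
  destruct (H2 a t s Da Ht Hs) as [A3 A4].
  destruct (H2 a s s Da Hs Hs) as [A5 _]. split.
  - rewrite Rabs_mult. apply Rmult_le_compat; auto; apply Rabs_pos.
  - replace (f a t * g a t - f a s * g a s) with
      (f a t * (g a t - g a s) + g a s * (f a t - f a s)) by ring.
    eapply Rle_trans; [apply Rabs_triang|]. rewrite !Rabs_mult.
    assert (Rabs (f a t) * Rabs (g a t - g a s) <= B1 * (C2 * Rabs (t - s))).
    { apply Rmult_le_compat; auto; apply Rabs_pos. }
    assert (Rabs (g a s) * Rabs (f a t - f a s) <= B2 * (C1 * Rabs (t - s))).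
    { apply Rmult_le_compat; auto; apply Rabs_pos. }
    lra.
Qed.

Lemma nice_comp : forall (phi : R -> R) m L f, 0 <= L ->
  (forall u v, m <= u -> m <= v -> Rabs (phi u - phi v) <= L * Rabs (u - v)) ->
  (forall a t, D a -> 1 <= t <= 2 -> m <= f a t) ->
  nice D f -> nice D (fun a t => phi (f a t)).
Proof.
  intros phi m L f HL Hphi Hm [B [C [HB [HC H]]]].
  exists (L * (B + Rabs m) + Rabs (phi m)), (L * C).
  split; [pose proof (Rabs_pos m); pose proof (Rabs_pos (phi m)); nra|split; [nra|]].
  intros a t s Da Ht Hs. destruct (H a t s Da Ht Hs) as [A1 A2]. split.
  - 
    replace (phi (f a t)) with ((phi (f a t) - phi m) + phi m) by ring.
    eapply Rle_trans; [apply Rabs_triang|].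
    apply Rplus_le_compat_r. eapply Rle_trans; [apply Hphi; auto; lra|].
    apply Rmult_le_compat_l; auto.
    eapply Rle_trans; [apply Rabs_triang|]. rewrite Rabs_Ropp. lra.
  - eapply Rle_trans; [apply Hphi; auto|]. rewrite Rmult_assoc.
    apply Rmult_le_compat_l; auto.
Qed.

Lemma nice_fsum : forall n (F : nat -> (nat -> R) -> R -> R),
  (forall i, (i < n)%nat -> nice D (F i)) ->
  nice D (fun a t => fsum n (fun i => F i a t)).
Proof.
  induction n; intros F H.
  - simpl. apply (nice_const (fun _ => 0) 0). intros; rewrite Rabs_R0; lra.
  - simpl. apply nice_plus.
    + apply IHn. intros; apply H; lia.
    + apply H; lia.
Qed.
End Nice.

Lemma inv_lip : forall u v, 1 <= u -> 1 <= v -> Rabs (/ u - / v) <= 1 * Rabs (u - v).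
Proof.
  intros u v Hu Hv.
  replace (/ u - / v) with ((v - u) * / (u * v)) by (field; lra).
  rewrite Rabs_mult, <- Rabs_minus_sym.
  rewrite (Rabs_pos_eq (/ (u * v))) by (left; apply Rinv_0_lt_compat; nra).
  assert (/ (u * v) <= 1).
  { rewrite <- Rinv_1. apply Rinv_le_contravar; nra. }
  pose proof (Rabs_pos (u - v)). nra.
Qed.

Lemma ln_lip1 : forall u v, 1 <= v -> v <= u -> ln u - ln v <= u - v.
Proof.
  intros u v Hv Huv. rewrite <- ln_div by lra.
  pose proof (exp_ineq1_le (ln (u / v))). rewrite exp_ln in H.
  2:{ apply Rdiv_lt_0_compat; lra. }
  assert (u / v - 1 <= u - v).
  { replace (u / v - 1) with ((u - v) / v) by (field; lra).
    unfold Rdiv. assert (/ v <= 1) by (rewrite <- Rinv_1; apply Rinv_le_contravar; lra).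
    assert (0 < / v) by (apply Rinv_0_lt_compat; lra). nra. }
  lra.
Qed.

Lemma ln_lip : forall u v, 1 <= u -> 1 <= v -> Rabs (ln u - ln v) <= 1 * Rabs (u - v).
Proof.
  intros u v Hu Hv. destruct (Rle_dec v u).
  - assert (ln v <= ln u) by (apply ln_le; lra).
    pose proof (ln_lip1 u v Hv r).
    rewrite !Rabs_pos_eq; lra.
  - assert (ln u <= ln v) by (apply ln_le; lra).
    pose proof (ln_lip1 v u Hu ltac:(lra)).
    rewrite (Rabs_minus_sym (ln u)), (Rabs_minus_sym u), !Rabs_pos_eq; lra.
Qed.

Definition Dbox (K : nat) (a : nat -> R) : Prop := forall j, (j < K)%nat -> 1 <= a j <= 2.

Section L.
Variables (K k g : nat).
Hypothesis Hk : (k < K)%nat.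

Lemma upd_ge1 : forall a t j, Dbox K a -> 1 <= t <= 2 -> (j < K)%nat -> 1 <= upd a k t j.
Proof.
  intros a t j Da Ht Hj. unfold upd. destruct (Nat.eqb j k); [lra| apply Da; auto].
Qed.

Lemma coord_nice : forall j, (j < K)%nat -> nice (Dbox K) (fun a t => upd a k t j).
Proof.
  intros j Hj. unfold upd. destruct (Nat.eqb j k).
  - apply nice_id.
  - apply (nice_const (Dbox K) (fun a => a j) 2). intros a Da.
    destruct (Da j Hj). rewrite Rabs_pos_eq; lra.
Qed.

Lemma fsum_geINR : forall n f, (forall i, (i < n)%nat -> 1 <= f i) -> INR n <= fsum n f.
Proof.
  induction n; intros f H; cbn [fsum].
  - simpl; lra.
  - rewrite S_INR. assert (INR n <= fsum n f) by (apply IHn; intros; apply H; lia).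
    assert (1 <= f n) by (apply H; lia). lra.
Qed.

Lemma S_ge1 : (1 <= K)%nat -> forall a t, Dbox K a -> 1 <= t <= 2 ->
  1 <= strength K (upd a k t).
Proof.
  intros HK a t Da Ht. unfold strength.
  eapply Rle_trans; [|apply fsum_geINR; intros; apply upd_ge1; auto].
  apply (le_INR 1). auto.
Qed.

Lemma S_nice : nice (Dbox K) (fun a t => strength K (upd a k t)).
Proof.
  unfold strength. apply (nice_fsum _ K (fun j a t => upd a k t j)).
  intros; apply coord_nice; auto.
Qed.

Lemma y_nice : forall j, nice (Dbox K) (fun _ _ => onehot g j).
Proof.
  intros j. apply (nice_const _ (fun _ => onehot g j) 1). intros.
  unfold onehot. destruct (Nat.eqb j g); [rewrite Rabs_R1|rewrite Rabs_R0]; lra.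
Qed.

Lemma inv_nice : forall f, (forall a t, Dbox K a -> 1 <= t <= 2 -> 1 <= f a t) ->
  nice (Dbox K) f -> nice (Dbox K) (fun a t => / f a t).
Proof.
  intros f Hf Hn. apply (nice_comp _ Rinv 1 1); auto; [lra|]. apply inv_lip.
Qed.

Lemma lnf_nice : forall f, (forall a t, Dbox K a -> 1 <= t <= 2 -> 1 <= f a t) ->
  nice (Dbox K) f -> nice (Dbox K) (fun a t => ln (f a t)).
Proof.
  intros f Hf Hn. apply (nice_comp _ ln 1 1); auto; [lra|]. apply ln_lip.
Qed.

Lemma dig_nice : forall f, (forall a t, Dbox K a -> 1 <= t <= 2 -> 1 <= f a t) ->
  nice (Dbox K) f -> nice (Dbox K) (fun a t => digamma (f a t)).
Proof.
  intros f Hf Hn. apply (nice_comp _ digamma 1 (Series (fun n => 2 * tel n))); auto.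
  - assert (H := digamma_lip 2 1 ltac:(lra) ltac:(lra)).
    rewrite (Rabs_pos_eq (2 - 1)) in H by lra.
    pose proof (Rabs_pos (digamma 2 - digamma 1)). lra.
  - apply digamma_lip.
Qed.

Hypothesis HK : (1 <= K)%nat.

Lemma loss_nice : forall L, nice (Dbox K) (fun a t => loss L K (onehot g) (upd a k t)).
Proof.
  pose proof S_nice as HS. pose proof (S_ge1 HK) as HS1.
  intros L; destruct L; unfold loss, loss_MSE, loss_CE, loss_Log; cbv zeta.
  - apply (nice_fsum _ K (fun j a t => (onehot g j - upd a k t j / strength K (upd a k t)) ^ 2 +
       upd a k t j * (strength K (upd a k t) - upd a k t j) /
       (strength K (upd a k t) ^ 2 * (strength K (upd a k t) + 1)))).
    intros j Hj. pose proof (coord_nice j Hj) as Hc.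
    apply nice_plus.
    + assert (HF : nice (Dbox K) (fun a t => onehot g j - upd a k t j * / strength K (upd a k t))).
      { apply nice_minus; [apply y_nice|]. apply nice_mult; auto. apply inv_nice; auto. }
      apply (nice_ext _ _ _ (fun a t => eq_sym (Rmult_1_r _)) ) in HF.
      refine (nice_ext _ (fun a t => (onehot g j - upd a k t j * / strength K (upd a k t)) *
         (onehot g j - upd a k t j * / strength K (upd a k t))) _ _ _).
      { intros; simpl; rewrite Rmult_1_r; reflexivity. }
      apply nice_mult; apply (nice_ext _ _ _ (fun a t => Rmult_1_r _) HF).
    + unfold Rdiv. apply nice_mult; [apply nice_mult; auto; apply nice_minus; auto|].
      apply inv_nice.
      * intros a t Da Ht. pose proof (HS1 a t Da Ht). simpl. nra.
      * refine (nice_ext _ (fun a t => strength K (upd a k t) * strength K (upd a k t) *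
           (strength K (upd a k t) + 1)) _ _ _).
        { intros; simpl; rewrite Rmult_1_r; reflexivity. }
        apply nice_mult; [apply nice_mult; auto|]. apply nice_plus; auto.
        apply (nice_const _ (fun _ => 1) 1); intros; rewrite Rabs_R1; lra.
  - apply (nice_fsum _ K (fun j a t => onehot g j * (digamma (strength K (upd a k t)) - digamma (upd a k t j)))).
    intros j Hj. apply nice_mult; [apply y_nice|]. apply nice_minus; apply dig_nice; auto.
    + intros; apply upd_ge1; auto.
    + apply coord_nice; auto.
  - apply (nice_fsum _ K (fun j a t => onehot g j * (ln (strength K (upd a k t)) - ln (upd a k t j)))).
    intros j Hj. apply nice_mult; [apply y_nice|]. apply nice_minus; apply lnf_nice; auto.
    + intros; apply upd_ge1; auto.
    + apply coord_nice; auto.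
Qed.
End L.

Lemma Derive_bound : forall f x C, 
  (forall h, 0 < Rabs h < 1 -> Rabs ((f (x + h) - f x) / h) <= C) -> Rabs (Derive f x) <= C.
Proof.
  intros f x C H. unfold Derive, Lim.
  set (u := fun n => (f (x + Rbar_loc_seq 0 n) - f x) / Rbar_loc_seq 0 n).
  assert (Hev : eventually (fun n => Rabs (u n) <= C)).
  { exists 1%nat. intros n Hn. unfold u. apply H. simpl.
    assert (1 <= INR n) by (apply (le_INR 1); lia).
    rewrite Rplus_0_l, Rabs_pos_eq.
    - split; [apply Rinv_0_lt_compat; lra|]. rewrite <- Rinv_1 at 2.
      apply Rinv_lt_contravar; lra.
    - left; apply Rinv_0_lt_compat; lra. }
  assert (H1 : Rbar_le (Lim_seq u) (Lim_seq (fun _ => C))).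
  { apply Lim_seq_le_loc. destruct Hev as [N HN]. exists N; intros n Hn.
    specialize (HN n Hn). apply Rabs_le_between in HN; lra. }
  assert (H2 : Rbar_le (Lim_seq (fun _ => - C)) (Lim_seq u)).
  { apply Lim_seq_le_loc. destruct Hev as [N HN]. exists N; intros n Hn.
    specialize (HN n Hn). apply Rabs_le_between in HN; lra. }
  rewrite Lim_seq_const in H1, H2. fold u.
  destruct (Lim_seq u) as [l| |]; simpl in *; try contradiction.
  apply Rabs_le; lra.
Qed.

Lemma exp_lip1 : forall u v, v <= u -> exp u - exp v <= exp u * (u - v).
Proof.
  intros u v Huv. pose proof (exp_ineq1_le (v - u)).
  replace (exp v) with (exp u * exp (v - u)) by (rewrite <- exp_plus; f_equal; ring).
  pose proof (exp_pos u). nra.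
Qed.

Lemma exp_lip : forall u v, Rabs (exp u - exp v) <= exp (Rmax u v) * Rabs (u - v).
Proof.
  intros u v. destruct (Rle_dec v u).
  - rewrite Rmax_left by lra. pose proof (exp_lip1 u v r).
    assert (exp v <= exp u) by (destruct r; [left; apply exp_increasing; auto| subst; lra]).
    rewrite !Rabs_pos_eq; lra.
  - rewrite Rmax_right by lra. pose proof (exp_lip1 v u ltac:(lra)).
    assert (exp u <= exp v) by (left; apply exp_increasing; lra).
    rewrite (Rabs_minus_sym (exp u)), (Rabs_minus_sym u), !Rabs_pos_eq; lra.
Qed.

Lemma ln_le_m1 : forall x, 0 < x -> ln x <= x - 1.
Proof.
  intros x Hx. pose proof (exp_ineq1_le (ln x)). rewrite exp_ln in H; lra.
Qed.

Lemma sp_lip1 : forall u v, v <= u -> 0 <= softplus u - softplus v <= exp u - exp v.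
Proof.
  intros u v Huv. unfold softplus.
  pose proof (exp_pos u). pose proof (exp_pos v).
  assert (exp v <= exp u) by (destruct Huv; [left; apply exp_increasing; auto| subst; lra]).
  split.
  - assert (ln (1 + exp v) <= ln (1 + exp u)) by (apply ln_le; lra). lra.
  - rewrite <- ln_div by lra.
    eapply Rle_trans; [apply ln_le_m1; apply Rdiv_lt_0_compat; lra|].
    replace ((1 + exp u) / (1 + exp v) - 1) with ((exp u - exp v) / (1 + exp v)) by (field; lra).
    unfold Rdiv. assert (/ (1 + exp v) <= 1) by (rewrite <- Rinv_1; apply Rinv_le_contravar; lra).
    assert (0 < / (1 + exp v)) by (apply Rinv_0_lt_compat; lra). nra.
Qed.

Lemma act_lip : forall A, A = SoftPlus \/ A = ExpAct -> forall u v,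
  Rabs (act A u - act A v) <= Rabs (exp u - exp v).
Proof.
  intros A [-> | ->] u v; simpl; [|lra].
  destruct (Rle_dec v u).
  - pose proof (sp_lip1 u v r). rewrite !Rabs_pos_eq; lra.
  - pose proof (sp_lip1 v u ltac:(lra)).
    rewrite (Rabs_minus_sym (softplus u)), (Rabs_minus_sym (exp u)), !Rabs_pos_eq; lra.
Qed.

Lemma act_range : forall A, A = SoftPlus \/ A = ExpAct -> forall t, t < 0 ->
  0 <= act A t <= 1.
Proof.
  intros A [-> | ->] t Ht; simpl.
  - unfold softplus. pose proof (exp_pos t).
    assert (exp t < 1) by (rewrite <- exp_0; apply exp_increasing; auto).
    split.
    + rewrite <- ln_1. apply ln_le; lra.
    + pose proof (ln_le_m1 (1 + exp t) ltac:(lra)). lra.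
  - pose proof (exp_pos t).
    assert (exp t < 1) by (rewrite <- exp_0; apply exp_increasing; auto). lra.
Qed.

Lemma per_k : forall K g L A, (1 <= K)%nat -> A = SoftPlus \/ A = ExpAct ->
  forall k, (k < K)%nat -> forall eps, 0 < eps -> exists M, M <= -1 /\ forall o,
    (forall j, (j < K)%nat -> o j < M) -> Rabs (dloss_dlogit L A K (onehot g) o k) < eps.
Proof.
  intros K g L A HK HA k Hk eps Heps.
  destruct (loss_nice K k g Hk HK L) as [B [C [_ [HC H]]]].
  set (M := Rmin (-1) (ln (eps / (C + 1)) - 1)).
  exists M. split; [apply Rmin_l|]. intros o Ho.
  assert (HM1 : M <= -1) by apply Rmin_l.
  assert (HM2 : M + 1 <= ln (eps / (C + 1))) by (pose proof (Rmin_r (-1) (ln (eps / (C + 1)) - 1)); fold M in H0; lra).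
  assert (HE : exp (M + 1) <= eps / (C + 1)).
  { rewrite <- (exp_ln (eps / (C + 1))) by (apply Rdiv_lt_0_compat; lra).
    destruct HM2; [left; apply exp_increasing; auto| rewrite H0; lra]. }
  set (a := alpha_of A o).
  assert (Hf : forall t, loss_of_logits L A K (onehot g) (upd o k t) = loss L K (onehot g) (upd a k (act A t + 1))).
  { intros t. unfold loss_of_logits. f_equal. extensionality j. unfold a, alpha_of, upd.
    destruct (Nat.eqb j k); reflexivity. }
  assert (Da : Dbox K a).
  { intros j Hj. unfold a, alpha_of. pose proof (act_range A HA (o j) ltac:(specialize (Ho j Hj); lra)). lra. }
  apply Rle_lt_trans with (C * (eps / (C + 1))).
  2:{ apply Rlt_le_trans with (C * (eps / (C + 1)) + eps / (C + 1)).
      - assert (0 < eps / (C + 1)) by (apply Rdiv_lt_0_compat; lra). lra.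
      - right. field. lra. }
  unfold dloss_dlogit. apply Derive_bound. intros h Hh.
  rewrite !Hf.
  assert (Hh2 : - 1 < h < 1) by (destruct Hh as [_ Hh1]; apply Rabs_def2 in Hh1; lra).
  assert (Hok : o k < M) by (apply Ho; auto).
  pose proof (act_range A HA (o k + h) ltac:(lra)) as R1.
  pose proof (act_range A HA (o k) ltac:(lra)) as R2.
  destruct (H a (act A (o k + h) + 1) (act A (o k) + 1) Da ltac:(lra) ltac:(lra)) as [_ HL].
  pose proof (act_lip A HA (o k + h) (o k)) as HAl.
  pose proof (exp_lip (o k + h) (o k)) as HEl.
  replace (o k + h - o k) with h in HEl by ring.
  assert (Hmax : exp (Rmax (o k + h) (o k)) <= exp (M + 1)).
  { left. apply exp_increasing. apply Rmax_lub_lt; lra. }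
  replace (act A (o k + h) + 1 - (act A (o k) + 1)) with (act A (o k + h) - act A (o k)) in HL by ring.
  assert (Hq : Rabs (loss L K (onehot g) (upd a k (act A (o k + h) + 1)) -
     loss L K (onehot g) (upd a k (act A (o k) + 1))) <= C * (eps / (C + 1)) * Rabs h).
  { eapply Rle_trans; [exact HL|]. rewrite Rmult_assoc. apply Rmult_le_compat_l; auto.
    eapply Rle_trans; [exact HAl|]. eapply Rle_trans; [exact HEl|].
    apply Rmult_le_compat_r; [apply Rabs_pos|]. lra. }
  unfold Rdiv at 1. rewrite Rabs_mult, Rabs_inv.
  apply Rle_trans with (C * (eps / (C + 1)) * Rabs h * / Rabs h).
  - apply Rmult_le_compat_r; auto. left; apply Rinv_0_lt_compat; lra.
  - right. field. lra.
Qed.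

Lemma fsum_zero : forall n f, (forall i, (i < n)%nat -> f i = 0) -> fsum n f = 0.
Proof.
  induction n; intros f H; cbn [fsum]; [reflexivity|].
  rewrite IHn by (intros; apply H; lia). rewrite H by lia. ring.
Qed.

Lemma fsum_abs : forall n f c, (forall i, (i < n)%nat -> Rabs (f i) <= c) ->
  Rabs (fsum n f) <= INR n * c.
Proof.
  induction n; intros f c H; cbn [fsum].
  - simpl. rewrite Rabs_R0; lra.
  - rewrite S_INR. eapply Rle_trans; [apply Rabs_triang|].
    assert (Rabs (fsum n f) <= INR n * c) by (apply IHn; intros; apply H; lia).
    assert (Rabs (f n) <= c) by (apply H; lia). lra.
Qed.

Lemma unif : forall K g L A, (1 <= K)%nat -> A = SoftPlus \/ A = ExpAct ->
  forall eps, 0 < eps -> forall n, (n <= K)%nat -> exists M, forall o,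
    (forall j, (j < K)%nat -> o j < M) ->
    forall k, (k < n)%nat -> Rabs (dloss_dlogit L A K (onehot g) o k) < eps.
Proof.
  intros K g L A HK HA eps Heps. induction n; intros Hn.
  - exists 0. intros; lia.
  - destruct (IHn ltac:(lia)) as [M1 H1].
    destruct (per_k K g L A HK HA n ltac:(lia) eps Heps) as [M2 [_ H2]].
    exists (Rmin M1 M2). intros o Ho k Hk.
    assert (Ho1 : forall j, (j < K)%nat -> o j < M1)
      by (intros j Hj; specialize (Ho j Hj); pose proof (Rmin_l M1 M2); lra).
    assert (Ho2 : forall j, (j < K)%nat -> o j < M2)
      by (intros j Hj; specialize (Ho j Hj); pose proof (Rmin_r M1 M2); lra).
    destruct (Nat.eq_dec k n) as [->|].
    + apply H2; auto.
    + apply H1; auto; lia.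
Qed.

Theorem theorem1 :
  forall (K g : nat), (2 <= K)%nat -> (g < K)%nat ->
  forall (L : loss_kind),
  (* (i) ReLU, zero-evidence sample *)
  (forall o : nat -> R, (forall k, (k < K)%nat -> o k <= 0) ->
     (forall k, (k < K)%nat -> dloss_dlogit_relu L K (onehot g) o k = 0) /\
     (forall (J : nat -> nat -> R) (p : nat),
        (* J k p = d o_k / d theta_p *)
        fsum K (fun k => dloss_dlogit_relu L K (onehot g) o k * J k p) = 0))
  /\
  (* (ii) SoftPlus or exp: limit as o_k -> -oo for all k *)
  (forall A : activation, A = SoftPlus \/ A = ExpAct ->
     (forall k, (k < K)%nat ->
        forall eps : R, 0 < eps -> exists M : R, forall o : nat -> R,
          (forall j, (j < K)%nat -> o j < M) ->
          Rabs (dloss_dlogit L A K (onehot g) o k) < eps) /\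
     (forall (J : (nat -> R) -> nat -> nat -> R) (B : R),
        (* d o_k / d theta_p stays bounded (eventually, as o -> -oo) *)
        (exists M0 : R, forall o k p, (forall j, (j < K)%nat -> o j < M0) ->
           Rabs (J o k p) <= B) ->
        forall (p : nat) (eps : R), 0 < eps -> exists M : R, forall o : nat -> R,
          (forall j, (j < K)%nat -> o j < M) ->
          Rabs (fsum K (fun k => dloss_dlogit L A K (onehot g) o k * J o k p)) < eps)).
Proof.
  intros K g HK Hg L. assert (HK1 : (1 <= K)%nat) by lia. split.
  - intros o Ho.
    assert (Hz : forall k, (k < K)%nat -> dloss_dlogit_relu L K (onehot g) o k = 0).
    { intros k Hk. unfold dloss_dlogit_relu, relu_deriv.
      destruct (Rlt_dec 0 (o k)) as [Hc|]; [specialize (Ho k Hk); lra| ring]. }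
    split; auto. intros J p. apply fsum_zero. intros i Hi. rewrite Hz by auto. ring.
  - intros A HA. split.
    + intros k Hk eps Heps. destruct (per_k K g L A HK1 HA k Hk eps Heps) as [M [_ HM]].
      exists M; auto.
    + intros J B [M0 HM0] p eps Heps.
      assert (HKpos : 0 < INR K) by (apply lt_0_INR; lia).
      set (e' := eps / (INR K * (Rabs B + 1))).
      assert (He' : 0 < e') by (unfold e'; apply Rdiv_lt_0_compat; [lra|]; pose proof (Rabs_pos B); nra).
      destruct (unif K g L A HK1 HA e' He' K (le_n K)) as [M HM].
      exists (Rmin M M0). intros o Ho.
      assert (Ho1 : forall j, (j < K)%nat -> o j < M)
        by (intros j Hj; specialize (Ho j Hj); pose proof (Rmin_l M M0); lra).
      assert (Ho2 : forall j, (j < K)%nat -> o j < M0)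
        by (intros j Hj; specialize (Ho j Hj); pose proof (Rmin_r M M0); lra).
      eapply Rle_lt_trans.
      * apply (fsum_abs K _ (e' * Rabs B)). intros i Hi. rewrite Rabs_mult.
        apply Rmult_le_compat; try apply Rabs_pos.
        -- left; apply HM; auto.
        -- eapply Rle_trans; [apply HM0; exact Ho2| apply RRle_abs].
      * unfold e'. replace (INR K * (eps / (INR K * (Rabs B + 1)) * Rabs B))
          with (eps * (Rabs B / (Rabs B + 1))) by (field; pose proof (Rabs_pos B); lra).
        assert (Rabs B / (Rabs B + 1) < 1).
        { pose proof (Rabs_pos B). apply (Rmult_lt_reg_r (Rabs B + 1)); [lra|].
          unfold Rdiv. rewrite Rmult_assoc, Rinv_l by lra. lra. }
        nra.
Qed.
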